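(* Let $(E,\mathscr{T},\le)$ be a locally compact $T_2$-preordered Tychonoff space such that $G(\le)=\bigcap_{f\in\mathcal{F}}G_f$, and let $\mathcal{H}\subseteq\mathcal{F}$ with $G(\le)=\bigcap_{h\in\mathcal{H}}G_h$. Let $c:E\to cE$ be the $\mathcal{H}$-compactification. Then the remainder $cE\setminus c(E)$, endowed with the preorder induced from $\le_c$, is a $T_2$-ordered space (in particular $\le_c$ restricted to the remainder is antisymmetric).
   Context: $T_2$-preordered: the graph $G(\le)=\{(x,y):x\le y\}$ is closed in $E\times E$; $T_2$-ordered: additionally antisymmetric. $\mathcal{F}$ is the family of continuous isotone ($x\le y\Rightarrow f(x)\le f(y)$) functions $f:E\to[0,1]$; $G_f=\{(x,y):f(x)\le f(y)\}$. $\mathcal{C}$ is the family of continuous functions $E\to[0,1]$ that are constant outside some compact set. For $\mathcal{H}\subseteq\mathcal{F}$ with $G(\le)=\bigcap_{h\in\mathcal{H}}G_h$, the $\mathcal{H}$-compactification is the map $c:E\to[0,1]^{\mathcal{H}\cup\mathcal{C}}$, $c(x)=(g(x))_{g\in\mathcal{H}\cup\mathcal{C}}$, with $cE$ the closure of $c(E)$ in the product topology, $\mathscr{T}_c$ the induced topology, and $\le_c$ the restriction to $cE$ of the preorder $x\preceq y$ iff $x_h\le y_h$ for all $h\in\mathcal{H}$. *)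

(* Defs.v *)
From HB Require Import structures.
From mathcomp Require Import all_boot all_order all_algebra.
From mathcomp Require Import all_classical all_reals all_analysis.
Import Order.TTheory GRing.Theory Num.Theory.
Import numFieldTopology.Exports numFieldNormedType.Exports.
Local Open Scope classical_set_scope.
Local Open Scope ring_scope.

Unset Implicit Arguments.
Unset Strict Implicit.
Unset Printing Implicit Defensive.

Definition graph_rel (T : Type) (le : T -> T -> Prop) : set (T * T) :=
  [set xy | le xy.1 xy.2].

Section Defs.
Variables (R : realType) (E : topologicalType).

Definition graph_fun (T : Type) (f : T -> R) : set (T * T) :=
  [set xy | f xy.1 <= f xy.2].

Definition is_preorder (T : Type) (le : T -> T -> Prop) :=
  (forall x, le x x) /\ (forall x y z, le x y -> le y z -> le x z).

Definition tychonoff_space (T : topologicalType) :=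
  hausdorff_space T /\ completely_regular_space T.

Definition isotone01 (le : E -> E -> Prop) : set (E -> R) :=
  [set f : E -> R | continuous f /\ (forall x, 0 <= f x <= 1) /\
           (forall x y, le x y -> f x <= f y)].

Definition cc01 : set (E -> R) :=
  [set g : E -> R | continuous g /\ (forall x, 0 <= g x <= 1) /\
     exists K : set E, compact K /\ exists a : R, forall x, ~ K x -> g x = a].

Definition hc_index (H : set (E -> R)) := {g : E -> R | (H `|` cc01) g}.

(* the H-compactification map c : E -> [0,1]^(H ∪ C) (product topology);
   values lie in [0,1], we take the ambient product R^(H ∪ C) whose
   closed subset [0,1]^(H ∪ C) contains the closure of c(E) *)
Definition hcspace (H : set (E -> R)) := {ptws (hc_index H) -> R}.

Definition hcomp (H : set (E -> R)) (x : E) : hcspace H :=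
  fun i : hc_index H => sval i x.

Definition hcompE (H : set (E -> R)) : set (hcspace H) :=
  closure (range (hcomp H)).

Definition remainder (H : set (E -> R)) : set (hcspace H) :=
  hcompE H `\` range (hcomp H).

Definition le_c (H : set (E -> R)) (p q : hcspace H) : Prop :=
  forall i : hc_index H, H (sval i) -> p i <= q i.

End Defs.

Definition T2_ordered_subspace (T : topologicalType) (A : set T)
    (le : T -> T -> Prop) : Prop :=
  [/\ (forall x, A x -> le x x),
      (forall x y z, A x -> A y -> A z -> le x y -> le y z -> le x z),
      (forall x y, A x -> A y -> le x y -> le y x -> x = y) &
      closure (graph_rel T le `&` (A `*` A)) `&` (A `*` A) `<=` graph_rel T le].

(* Main.v *)
Require Import Defs.
From HB Require Import structures.
From mathcomp Require Import all_boot all_order all_algebra.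
From mathcomp Require Import all_classical all_reals all_analysis.
From mathcomp Require Import lra.
Import Order.TTheory GRing.Theory Num.Theory.
Import numFieldTopology.Exports numFieldNormedType.Exports.
Local Open Scope classical_set_scope.
Local Open Scope ring_scope.

Lemma nbhs_abs_lt (R : realType) (x : R) e : 0 < e -> nbhs x [set y | `|x - y| < e].
Proof. move=> e0. exact: (nbhsx_ballx x e e0). Qed.

Lemma nbhs_pair (T U : topologicalType) (x : T) (y : U) A B :
  nbhs x A -> nbhs y B -> nbhs (x,y) (A `*` B).
Proof. move=> hA hB. by exists (A,B). Qed.

Arguments nbhs_abs_lt {R x e}.
Arguments nbhs_pair {T U x y A B}.
Section Aux.
Variables (R : realType) (E : topologicalType) (H : set (E -> R)).
HB.instance Definition _ := gen_eqMixin (hc_index R E H).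

Lemma projc (i : hc_index R E H) (p : hcspace R E H) (U : set R) :
  nbhs (p i) U -> nbhs p (fun q : hcspace R E H => U (q i)).
Proof. move=> hU. exact: (@proj_continuous (hc_index R E H) (fun _ => R) i p U hU). Qed.


Lemma rem_C (Hc : forall i : hc_index R E H, continuous (sval i))
  (p : hcspace R E H) : remainder R E H p ->
  forall (i : hc_index R E H) (K : set E) (a : R), compact K ->
  (forall x, ~ K x -> sval i x = a) -> p i = a.
Proof.
move=> [pcl pnr] i K a cK Ka.
apply: contrapT => neq.
have e0 : 0 < `|p i - a| by rewrite normr_gt0 subr_eq0; apply/eqP.
set F := filter_from (nbhs p) (fun U => hcomp R E H @^-1` U).
have FF : Filter F.
  apply: filter_from_filter; first by exists setT; exact: filterT.
  move=> U V hU hV; exists (U `&` V); first exact: filterI.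
  by move=> x [].
have PF : ProperFilter F.
  apply: filter_from_proper => U hU.
  have [q [[x _ <-] Ux]] := pcl U hU.
  by exists x.
have FK : F K.
  exists (fun q : hcspace R E H => `|p i - q i| < `|p i - a|).
    exact: (projc i p _ (nbhs_abs_lt e0)).
  move=> x /= hx; apply: contrapT => nK.
  by move: hx; rewrite /hcomp (Ka x nK) ltxx.
have [x [Kx clx]] := cK F PF FK.
apply: pnr; exists x => //.
apply: functional_extensionality_dep => j.
apply: Rhausdorff => V U hV hU.
have FA : F (hcomp R E H @^-1` (fun q : hcspace R E H => U (q j))).
  exists (fun q : hcspace R E H => U (q j)); last by [].
  exact: (projc j p).
have hB : nbhs x (sval j @^-1` V) by exact: Hc.
have [y [Ay By]] := clx _ _ FA hB.
by exists (sval j y).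
Qed.

End Aux.
Arguments projc {R E H i p U}.
Arguments rem_C {R E H} Hc {p} _ {i K a}.

Theorem mainTheorem11 (R : realType) (E : topologicalType)
  (le : E -> E -> Prop) (H : set (E -> R)) :
  locally_compact [set: E] ->
  tychonoff_space E ->
  is_preorder E le ->
  closed (graph_rel E le) ->
  graph_rel E le = \bigcap_(f in isotone01 R E le) graph_fun R E f ->
  H `<=` isotone01 R E le ->
  graph_rel E le = \bigcap_(h in H) graph_fun R E h ->
  T2_ordered_subspace (hcspace R E H) (remainder R E H) (le_c R E H).
Proof.
move=> _ _ _ _ _ HF _.
have Hc : forall i : hc_index R E H, continuous (sval i).
  move=> [g /= [/HF [] //|[]] //].
split.
- by move=> x _ i _.
- move=> x y z _ _ _ hxy hyz i Hi; exact: le_trans (hxy i Hi) (hyz i Hi).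
- move=> p q rp rq hpq hqp.
  apply: functional_extensionality_dep => i.
  case: (svalP i) => [Hi|[_ [_ [K [cK [a Ka]]]]]].
    by apply/eqP; rewrite eq_le hpq // hqp.
  by rewrite (rem_C Hc rp cK Ka) (rem_C Hc rq cK Ka).
- move=> [p q] [cl _] i Hi /=.
  rewrite leNgt; apply/negP => qp.
  have e0 : 0 < (p i - q i) / 2 by rewrite divr_gt0 // subr_gt0.
  have := cl _ (nbhs_pair (projc (i:=i) (p:=p) (nbhs_abs_lt e0)) (projc (i:=i) (p:=q) (nbhs_abs_lt e0))).
  move=> [[p' q'] [[/= hle _] [/= h1 h2]]].
  have := hle i Hi.
  move: h1 h2; rewrite !ltr_norml => /andP[h1 h1'] /andP[h2 h2'] h.
  simpl in h; lra.
Qed.
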